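(* Let $B\in\mathbb{Z}^{n\times n}$ and $b\in\mathbb{Z}^n$. Define a relation on $\mathbb{Z}^n$ by $x\sim y$ if and only if there exists $z\in\mathbb{Z}^n$ with $x-y=Bz$ or $x+y+b=Bz$. Then $\sim$ is an equivalence relation and its number of equivalence classes is $$E(B,b)=\frac{|\det(B)|_\infty+O(B,b)}{2}.$$
   Context: $O(B,b)$ denotes the number of solutions $\bar x\in\mathbb{Z}_2^n$ of the linear system $\bar B\bar x=\bar b$ over $\mathbb{Z}_2=\mathbb{Z}/2\mathbb{Z}$, where the bar denotes reduction modulo $2$. For an integer $x$, $|x|_\infty=|x|$ if $x\neq 0$ and $|x|_\infty=\infty$ if $x=0$; arithmetic with $\infty$ follows $(\infty+k)/2=\infty$. *)

(* Defs.v *)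
From mathcomp Require Import all_boot all_order all_algebra.
Set Implicit Arguments. Unset Strict Implicit. Unset Printing Implicit Defensive.
Import Order.TTheory GRing.Theory Num.Theory.
Local Open Scope ring_scope.

Definition simB (n : nat) (B : 'M[int]_n) (b : 'cV[int]_n) (x y : 'cV[int]_n) : Prop :=
  exists z : 'cV[int]_n, x - y = B *m z \/ x + y + b = B *m z.

Definition is_equivalence (T : Type) (R : T -> T -> Prop) : Prop :=
  (forall x, R x x) /\ (forall x y, R x y -> R y x) /\
  (forall x y z, R x y -> R y z -> R x z).

Definition has_nclasses (T : Type) (R : T -> T -> Prop) (k : nat) : Prop :=
  exists f : T -> 'I_k, (forall i, exists x, f x = i) /\ (forall x y, R x y <-> f x = f y).

Definition has_infinitely_many_classes (T : Type) (R : T -> T -> Prop) : Prop :=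
  forall N : nat, exists g : 'I_N -> T, forall i j, R (g i) (g j) -> i = j.

Definition mod2mx (m n : nat) (A : 'M[int]_(m, n)) : 'M['F_2]_(m, n) :=
  map_mx (fun a : int => a%:~R) A.

Definition O2 (n : nat) (B : 'M[int]_n) (b : 'cV[int]_n) : nat :=
  #|[set x : 'cV['F_2]_n | mod2mx B *m x == mod2mx b]|.

(* Main.v *)
Require Import Defs.
From mathcomp Require Import all_boot all_order all_algebra zify ring.
Import Order.TTheory GRing.Theory Num.Theory.
Set Implicit Arguments. Unset Strict Implicit. Unset Printing Implicit Defensive.



Lemma card_setP (F : finType) (S : {set F}) (P : pred F) :
  #|[set u in S | P u]| = \sum_(u in S) (P u : nat).
Proof.
rewrite -sum1_card [RHS]big_mkcond [LHS]big_mkcond /=.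
apply: eq_bigr => u _; rewrite !inE; by case: (u \in S); case: (P u).
Qed.

Lemma orbit_classes (T : Type) (F : finType) (S : {set F}) (R : T -> T -> Prop)
  (p : T -> F) (s : F -> F) (x0 : T) :
  (forall x, p x \in S) -> (forall u, u \in S -> exists x, p x = u) ->
  (forall u, u \in S -> s u \in S) -> (forall u, u \in S -> s (s u) = u) ->
  (forall x y, R x y <-> p x = p y \/ p x = s (p y)) ->
  exists k, has_nclasses R k /\ (2 * k = #|S| + #|[set u in S | s u == u]|)%N.
Proof.
move=> pS psurj sS ssK HR.
pose r := @enum_rank F.
pose C := [set u in S | r u <= r (s u)].
pose c u := if r u <= r (s u) then u else s u.
have cC u : u \in S -> c u \in C.
  move=> uS; rewrite /c inE; case: ifP => h; first by rewrite uS h.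
  by rewrite sS // ssK // ltnW // ltnNge h.
have ceq u v : u \in S -> v \in S -> (c u = c v <-> u = v \/ u = s v).
  move=> uS vS; split.
    rewrite /c; case: ifP => _; case: ifP => _ => e; [by left|by right| |].
      by right; rewrite -e ssK.
    by left; move/(congr1 s): e; rewrite !ssK.
  case=> [->//|->]; rewrite /c ssK //.
  case: (ltngtP (r v) (r (s v))) => h //.
  by rewrite -(@enum_rank_inj F _ _ (val_inj h)).
have CS u : u \in C -> c u = u by rewrite inE /c => /andP[_ ->].
have Cx0 := cC _ (pS x0).
exists #|C|; split.
  exists (fun x => enum_rank_in Cx0 (c (p x))); split.
    move=> i; have := enum_valP i; set u := enum_val i => uC.
    have uS : u \in S by move: uC; rewrite inE => /andP[].
    have [x px] := psurj u uS; exists x; rewrite px (CS u uC); exact: enum_valK_in.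
  move=> x y; rewrite HR -ceq //; split.
    by move=> ->.
  by move/(enum_rank_in_inj (cC _ (pS x)) (cC _ (pS y))) => ->; [|apply: cC..].
idtac.
pose s' u := if u \in S then s u else u.
have s'K : involutive s'.
  by move=> u; rewrite /s'; case: (boolP (u \in S)) => uS; [rewrite (sS u uS) ssK | rewrite (negbTE uS)].
have neq u : r u != r (s u) -> (s u == u) = false.
  by apply: contraNF => /eqP ->.
rewrite !card_setP -[#|S|]sum1_card.
have -> : \sum_(u in S) 1 = \sum_(u in S) ((r u < r (s u)) + (s u == u) + (r (s u) < r u))%N.
  apply: eq_bigr => u uS; case: (ltngtP (r u) (r (s u))) => h.
  - by rewrite neq // neq_ltn h.
  - by rewrite neq // neq_ltn h orbT.
  - by rewrite -(@enum_rank_inj F _ _ (val_inj h)) eqxx.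
rewrite !big_split /=.
have -> : \sum_(u in S) (r (s u) < r u : nat) = \sum_(u in S) (r u < r (s u) : nat).
  rewrite (reindex_inj (can_inj s'K)) /=.
  have e : forall j, (s' j \in S) = (j \in S).
    by move=> j; rewrite /s'; case: (boolP (j \in S)) => jS; [rewrite sS | rewrite (negbTE jS)].
  rewrite (eq_bigl (fun j => j \in S)) //.
  by apply: eq_bigr => u uS; rewrite /s' uS ssK.
rewrite (eq_bigr (fun u => ((r u < r (s u)) + (s u == u))%N)); last first.
  move=> u uS; case: (ltngtP (r u) (r (s u))) => h.
  - by rewrite neq // neq_ltn h.
  - by rewrite neq // neq_ltn h orbT.
  - by rewrite -(@enum_rank_inj F _ _ (val_inj h)) eqxx.
rewrite big_split /=; lia.
Qed.

Local Open Scope ring_scope.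
Definition dv n (δ : 'I_n -> int) (v : 'cV[int]_n) := forall i, (δ i %| v i ord0)%Z.

Lemma lat_char n (L R : 'M[int]_n) (δ : 'I_n -> int) (w : 'cV[int]_n) :
  L \in unitmx -> R \in unitmx ->
  (exists z, w = (L *m diag_mx (\row_i δ i) *m R) *m z) <-> dv δ (invmx L *m w).
Proof.
move=> hL hR; split.
  case=> z ->; rewrite !mulmxA (mulVmx hL) mul1mx -!mulmxA mul_diag_mx => i.
  by rewrite mxE mxE dvdz_mulr.
move=> h; pose v := \col_i ((invmx L *m w) i ord0 %/ δ i)%Z.
exists (invmx R *m v).
rewrite -!mulmxA (mulmxA R) (mulmxV hR) mul1mx mul_diag_mx.
have -> : \matrix_(i, j) ((\row_i0 δ i0) 0 i * v i j) = invmx L *m w.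
  apply/matrixP => i j; rewrite (ord1 j) [LHS]mxE [X in X * _]mxE [v _ _]mxE mulrC divzK //.
by rewrite mulmxA (mulmxV hL) mul1mx.
Qed.

Lemma simB_char n (B L R : 'M[int]_n) (δ : 'I_n -> int) (b x y : 'cV[int]_n) :
  L \in unitmx -> R \in unitmx -> B = L *m diag_mx (\row_i δ i) *m R ->
  simB B b x y <-> dv δ (invmx L *m x - invmx L *m y) \/
                   dv δ (invmx L *m x + invmx L *m y + invmx L *m b).
Proof.
move=> hL hR ->; rewrite -!mulmxBr -!mulmxDr; split.
  case=> z [] e; [left|right]; apply/(lat_char _ _ hL hR); exists z; exact: e.
by case=> /(lat_char _ _ hL hR) [z e]; exists z; [left|right].
Qed.

Lemma simB_equiv n (B : 'M[int]_n) (b : 'cV[int]_n) : is_equivalence (simB B b).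
Proof.
split; [|split].
- by move=> x; exists 0; left; rewrite subrr mulmx0.
- move=> x y [z [e|e]].
    by exists (- z); left; rewrite mulmxN -e opprB.
  by exists z; right; rewrite -e (addrC y).
- move=> x y w [z1 [e1|e1]] [z2 [e2|e2]].
  + by exists (z1 + z2); left; rewrite mulmxDr -e1 -e2 addrA subrK.
  + exists (z1 + z2); right; rewrite mulmxDr -e1 -e2.
    by rewrite !addrA subrK.
  + exists (z1 - z2); right; rewrite mulmxBr -e1 -e2.
    by rewrite opprB (addrC w) addrA (addrAC x y b) addrK addrAC.
  + exists (z1 - z2); left; rewrite mulmxBr -e1 -e2.
    by rewrite (addrAC x y b) -(addrA y w b) addrKA (addrC w b) addrKA.
Qed.
Lemma F2eq (z1 z2 : int) : (z1%:~R == z2%:~R :> 'F_2) = (2 %| z1 - z2)%Z.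
Proof.
by rewrite -subr_eq0 -mulrzBr (dvdz_pcharf (pchar_Fp (isT : prime 2))).
Qed.

Lemma F2val (e : 'F_2) : e = ((val e)%:Z)%:~R.
Proof. by rewrite -pmulrn natr_Zp. Qed.

Lemma F2two : (2%:~R : 'F_2) = 0.
Proof. by apply/eqP; rewrite -[0]/(0%:~R) F2eq subr0 dvdzz. Qed.
Definition md (d m : int) : nat := `|(m %% d)%Z|%N.

Section Scalar.
Variable d : int.
Hypothesis d0 : d != 0.

Lemma mdz m : (md d m)%:Z = (m %% d)%Z.
Proof. by rewrite /md gez0_abs // modz_ge0. Qed.

Lemma md_lt m : (md d m < `|d|)%N.
Proof. by rewrite -ltz_nat mdz ltz_mod. Qed.

Lemma md_eq m m' : (md d m = md d m') <-> (d %| m - m')%Z.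
Proof.
rewrite -eqz_mod_dvd; split => [e|/eqP e]; first by rewrite -!mdz e.
by apply/eqP; rewrite -eqz_nat !mdz e.
Qed.

Lemma md_small (k : nat) : (k < `|d|)%N -> md d k = k.
Proof.
move=> h; apply/eqP; rewrite -eqz_nat mdz -modz_abs modz_small //.
Qed.

Lemma md_eq2 m m' β : (md d m = md d (- (md d m')%:Z - β)) <-> (d %| m + m' + β)%Z.
Proof.
rewrite md_eq mdz opprB opprK.
have e : ((m + (β + (m' %% d)%Z)) %% d = (m + m' + β) %% d)%Z.
  have -> : m + (β + (m' %% d)%Z) = (m' %% d)%Z + (m + β) by lia.
  by rewrite modzDml; congr (_ %% _)%Z; rewrite addrA (addrC m').
by split => /dvdz_mod0P h; apply/dvdz_mod0P; rewrite ?e // -e.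
Qed.

Lemma md_inv (k : nat) β : (k < `|d|)%N -> md d (- (md d (- k%:Z - β))%:Z - β) = k.
Proof.
move=> h; rewrite -{2}(md_small h); symmetry; apply/md_eq2.
by rewrite addrA addrN add0r addNr dvdz0.
Qed.

Lemma md_fix (k : nat) β : (k < `|d|)%N ->
  (md d (- k%:Z - β) = k) <-> (d %| 2 * k%:Z + β)%Z.
Proof.
move=> h; rewrite -{2}(md_small h) md_eq.
have -> : - k%:Z - β - k%:Z = - (2 * k%:Z + β) by rewrite opprD mulr2n mulrDl mul1r; lia.
by rewrite rpredN.
Qed.

Lemma fix_count (M : nat) (β : int) : (`|d| < M)%N ->
  #|[set k : 'I_M | (k < `|d|)%N && (d %| 2 * (k : nat)%:Z + β)%Z]| =
  #|[set e : 'F_2 | d%:~R * e == β%:~R]|.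
Proof.
move=> hM.
pose g (k : 'I_M) : 'F_2 := (((2 * (k : nat)%:Z + β) %/ d)%Z)%:~R.
set A := [set k : 'I_M | _].
have gA : {in A &, injective g}.
  move=> k k'; rewrite !inE => /andP[hk dk] /andP[hk' dk'] /eqP.
  rewrite /g F2eq => /dvdzP [t ht].
  apply: val_inj; rewrite /= -(md_small hk) -(md_small hk'); apply/md_eq.
  apply/dvdzP; exists t.
  have e1 := divzK dk; have e2 := divzK dk'.
  apply: (@mulfI _ 2) => //.
  rewrite mulrA (mulrC 2 t) -ht mulrBl e1 e2; ring.
rewrite -(card_in_imset gA); apply: eq_card => e; rewrite [in RHS]inE.
apply/imsetP/idP; last first.
  move=> /eqP he.
  pose e' := (val e)%:Z.
  have hee : e = e'%:~R by exact: F2val.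
  have : (2 %| d * e' - β)%Z by rewrite -F2eq rmorphM /= -hee he.
  case/dvdzP => t ht.
  have hk : (md d t < M)%N by apply: ltn_trans (md_lt t) hM.
  have key : (2 * (t %% d)%Z + β) = (e' - 2 * (t %/ d)%Z) * d.
    have := divz_eq t d; set u := (t %/ d)%Z; set r := (t %% d)%Z => htt.
    have -> : β = d * e' - t * 2 by rewrite -ht; ring.
    rewrite htt; ring.
  exists (Ordinal hk).
    rewrite inE /= md_lt /= mdz key.
    by apply/dvdzP; exists (e' - 2 * (t %/ d)%Z).
  rewrite /g /= mdz key.
  rewrite mulzK //; apply/eqP; rewrite eq_sym hee F2eq.
  have -> : e' - 2 * (t %/ d)%Z - e' = (- (t %/ d)%Z) * 2 by ring.
  by apply/dvdzP; eexists.
case=> k; rewrite inE => /andP[_ dk] ->.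
rewrite /g -rmorphM /= mulrC divzK // F2eq.
have -> : 2 * (k : nat)%:Z + β - β = (k : nat)%:Z * 2 by ring.
by apply/dvdzP; eexists.
Qed.
End Scalar.
Lemma mod2mxM m n p (A : 'M[int]_(m, n)) (B : 'M[int]_(n, p)) : mod2mx (A *m B) = mod2mx A *m mod2mx B.
Proof. by rewrite /mod2mx map_mxM. Qed.
Lemma mod2mx1 n : mod2mx (1%:M : 'M[int]_n) = 1%:M.
Proof. by rewrite /mod2mx map_mx1. Qed.

Lemma card_ffun_forall (I K : finType) (P : I -> pred K) :
  #|[set u : {ffun I -> K} | [forall i, P i (u i)]]| = \prod_i #|[set k | P i k]|.
Proof.
rewrite (eq_card (B := family (fun i => [set k | P i k]))); last first.
  by move=> u; rewrite inE; apply/forallP/familyP => h i; move: (h i); rewrite inE.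
rewrite card_family.
by rewrite /image_mem foldrE big_map enumT.
Qed.

Lemma card_col_forall (K : finType) n (P : 'I_n -> pred K) :
  #|[set w : 'cV[K]_n | [forall i, P i (w i 0)]]| = \prod_i #|[set k | P i k]|.
Proof.
rewrite -card_ffun_forall.
have inj : injective (fun f : {ffun 'I_n -> K} => \col_i f i).
  by move=> f g /matrixP h; apply/ffunP => i; move: (h i 0); rewrite !mxE.
rewrite -(card_imset _ inj); apply: eq_card => w; rewrite inE.
apply/idP/imsetP.
  move=> h; exists [ffun i => w i 0]; first by rewrite inE; apply/forallP => i; rewrite ffunE; exact: (forallP h i).
  by apply/matrixP => i j; rewrite !mxE ffunE (ord1 j).
case=> f; rewrite inE => /forallP h ->; apply/forallP => i; rewrite mxE; exact: h.
Qed.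

Lemma O2_char n (B L R : 'M[int]_n) (δ : 'I_n -> int) (b : 'cV[int]_n) :
  L \in unitmx -> R \in unitmx -> B = L *m diag_mx (\row_i δ i) *m R ->
  O2 B b = \prod_i #|[set e : 'F_2 | (δ i)%:~R * e == ((invmx L *m b) i 0)%:~R]|.
Proof.
move=> hL hR hB.
rewrite -(card_col_forall (fun i e => (δ i)%:~R * e == ((invmx L *m b) i 0)%:~R)).
have RK : cancel (@mulmx _ n n 1 (mod2mx R)) (@mulmx _ n n 1 (mod2mx (invmx R))).
  by move=> y; rewrite mulmxA -mod2mxM (mulVmx hR) mod2mx1 mul1mx.
have LK : cancel (@mulmx _ n n 1 (mod2mx L)) (@mulmx _ n n 1 (mod2mx (invmx L))).
  by move=> y; rewrite mulmxA -mod2mxM (mulVmx hL) mod2mx1 mul1mx.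
have RK' : cancel (@mulmx _ n n 1 (mod2mx (invmx R))) (@mulmx _ n n 1 (mod2mx R)).
  by move=> y; rewrite mulmxA -mod2mxM (mulmxV hR) mod2mx1 mul1mx.
have hD (w : 'cV['F_2]_n) : (mod2mx (diag_mx (\row_i δ i)) *m w == mod2mx (invmx L *m b)) =
    [forall i, (δ i)%:~R * w i 0 == ((invmx L *m b) i 0)%:~R].
  rewrite /mod2mx map_diag_mx mul_diag_mx.
  apply/eqP/forallP => [h i|h].
    by move/matrixP: h => /(_ i 0); rewrite !mxE => ->.
  by apply/matrixP => i j; rewrite !mxE (ord1 j); apply/eqP; move: (h i); rewrite !mxE.
have hb : b = L *m (invmx L *m b) by rewrite mulmxA (mulmxV hL) mul1mx.
rewrite /O2 -(card_imset _ (can_inj RK)); apply: eq_card => w; rewrite inE -hD.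
apply/imsetP/idP.
  case=> y; rewrite inE hB !mod2mxM => /eqP h ->.
  rewrite -(inj_eq (can_inj LK)) !mulmxA h -mod2mxM (mulmxV hL) mod2mx1 mul1mx.
  by [].
move=> h; exists (mod2mx (invmx R) *m w); last by rewrite RK'.
rewrite inE hB !mod2mxM -!mulmxA RK' (eqP h) mod2mxM mulmxA -mod2mxM (mulmxV hL) mod2mx1 mul1mx.
by [].
Qed.
Lemma card_lt_ord (M a : nat) : (a <= M)%N -> #|[set k : 'I_M | (k < a)%N]| = a.
Proof.
move=> h; rewrite -[a in RHS]card_ord.
have inj : injective (widen_ord h) by move=> i j /(congr1 val) /= /val_inj.
rewrite -(card_imset _ inj); apply: eq_card => k; rewrite inE.
apply/idP/imsetP => [hk | [j _ ->]]; last by rewrite /= ltn_ord.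
by exists (Ordinal hk) => //; apply: val_inj.
Qed.

Lemma main_nz n (B L R : 'M[int]_n) (δ : 'I_n -> int) (b : 'cV[int]_n) :
  L \in unitmx -> R \in unitmx -> B = L *m diag_mx (\row_i δ i) *m R -> (forall i, δ i != 0) ->
  exists k, has_nclasses (simB B b) k /\ (2 * k = (\prod_i `|δ i|) + O2 B b)%N.
Proof.
move=> hL hR hB hδ.
pose a i := `|δ i|%N.
pose M := (\max_(i < n) a i).+1.
have aM i : (a i < M)%N by rewrite ltnS (leq_bigmax i).
pose Li := invmx L. pose β := Li *m b.
pose p (x : 'cV[int]_n) : {ffun 'I_n -> 'I_M} := [ffun i => inord (md (δ i) ((Li *m x) i 0))].
pose s (u : {ffun 'I_n -> 'I_M}) : {ffun 'I_n -> 'I_M} :=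
  [ffun i => inord (md (δ i) (- (u i : nat)%:Z - β i 0))].
pose S := [set u : {ffun 'I_n -> 'I_M} | [forall i, (u i < a i)%N]].
have pv x i : (p x i : nat) = md (δ i) ((Li *m x) i 0).
  by rewrite ffunE inordK // (ltn_trans (md_lt (hδ i) _) (aM i)).
have sv u i : (s u i : nat) = md (δ i) (- (u i : nat)%:Z - β i 0).
  by rewrite ffunE inordK // (ltn_trans (md_lt (hδ i) _) (aM i)).
have h1 x : p x \in S by rewrite inE; apply/forallP => i; rewrite pv md_lt.
have h2 u : u \in S -> exists x, p x = u.
  rewrite inE => /forallP hu; exists (L *m \col_i (u i : nat)%:Z).
  apply/ffunP => i; apply: ord_inj; rewrite pv /Li mulKmx // mxE md_small //.
have h3 u : u \in S -> s u \in S by move=> _; rewrite inE; apply/forallP => i; rewrite sv md_lt.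
have h4 u : u \in S -> s (s u) = u.
  rewrite inE => /forallP hu; apply/ffunP => i; apply: ord_inj; rewrite !sv md_inv //.
have h5 x y : simB B b x y <-> p x = p y \/ p x = s (p y).
  rewrite (simB_char _ _ _ hL hR hB).
  have e1 : dv δ (invmx L *m x - invmx L *m y) <-> p x = p y.
    split => [h|/ffunP h i].
      apply/ffunP => i; apply: ord_inj; rewrite !pv; apply/md_eq => //.
      by move: (h i); rewrite !mxE.
    move: (h i) => /(congr1 val); rewrite /= !pv => /md_eq -/(_ (hδ i)).
    by rewrite !mxE.
  have e2 : dv δ (invmx L *m x + invmx L *m y + invmx L *m b) <-> p x = s (p y).
    split => [h|/ffunP h i].
      apply/ffunP => i; apply: ord_inj; rewrite pv sv pv; apply/md_eq2 => //.
      by move: (h i); rewrite !mxE.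
    move: (h i) => /(congr1 val); rewrite /= sv !pv => /md_eq2 -/(_ (hδ i)).
    by rewrite !mxE.
  by rewrite e1 e2.
have [k [hk hc]] := orbit_classes 0 h1 h2 h3 h4 h5.
exists k; split => //; rewrite hc; congr (_ + _)%N.
  rewrite (card_ffun_forall (fun i (k : 'I_M) => (k < a i)%N)); apply: eq_bigr => i _; exact: card_lt_ord (ltnW (aM i)).
rewrite (O2_char _ hL hR hB).
pose P i (k : 'I_M) := (k < `|δ i|)%N && (δ i %| 2 * (k : nat)%:Z + β i ord0)%Z.
transitivity #|[set u : {ffun 'I_n -> 'I_M} | [forall i, P i (u i)]]|; last first.
  rewrite (card_ffun_forall P); apply: eq_bigr => i _; exact: (fix_count (hδ i) (β i 0) (aM i)).
apply: eq_card => u; rewrite !inE; apply/andP/forallP.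
  case=> /forallP hu /eqP hs i; rewrite /P; apply/andP; split; first exact: hu.
  by apply/(@md_fix (δ i) (hδ i) (u i) (β i 0) (hu i)); rewrite -sv hs.
move=> hu; split; first by apply/forallP => i; case/andP: (hu i).
apply/eqP/ffunP => i; apply: ord_inj; rewrite sv.
by case/andP: (hu i) => hi hd; apply/(@md_fix (δ i) (hδ i) (u i) (β i 0) hi).
Qed.
Lemma absz_unit (x : int) : x \is a GRing.unit -> `|x|%N = 1%N.
Proof.
move=> ux; have := mulVr ux; move/(congr1 absz); rewrite abszM /= => /eqP.
by rewrite muln_eq1 => /andP[_ /eqP].
Qed.

Lemma absz_prod n (F : 'I_n -> int) : absz (\prod_i F i) = (\prod_i absz (F i))%N.
Proof. by rewrite (big_morph absz abszM (erefl : absz 1 = 1%N)). Qed.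

Lemma main_zero n (B L R : 'M[int]_n) (δ : 'I_n -> int) (b : 'cV[int]_n) (i0 : 'I_n) :
  L \in unitmx -> R \in unitmx -> B = L *m diag_mx (\row_i δ i) *m R -> δ i0 = 0 ->
  has_infinitely_many_classes (simB B b).
Proof.
move=> hL hR hB hi N.
pose Li := invmx L.
pose phi (x : 'cV[int]_n) := (Li *m x) i0 0.
pose c := (`|phi b|%N + 1)%N.
pose g (j : 'I_N) : 'cV[int]_n := L *m ((c + j)%:Z *: delta_mx i0 0).
have pg j : phi (g j) = (c + j)%:Z.
  by rewrite /phi /g /Li mulKmx // mxE !mxE !eqxx mulr1.
have addE (A A2 : 'cV[int]_n) : (A + A2) i0 0 = A i0 0 + A2 i0 0 by rewrite mxE.
have oppE (A : 'cV[int]_n) : (- A) i0 0 = - A i0 0 by rewrite mxE.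
exists g => j k /(simB_char _ _ _ hL hR hB) [] /(_ i0); rewrite hi dvd0z ?addE ?oppE;
  rewrite -/(phi (g j)) -/(phi (g k)) ?pg -/(phi b) => /eqP h; apply: val_inj => /=.
  lia.
rewrite /c in h; lia.
Qed.

Unset Implicit Arguments.
Theorem lemma5p10 (n : nat) (B : 'M[int]_n) (b : 'cV[int]_n) :
  is_equivalence (simB B b) /\
  (\det B != 0 ->
     exists k : nat, has_nclasses (simB B b) k /\
       (2 * k = `|\det B|%N + O2 B b)%N) /\
  (\det B = 0 -> has_infinitely_many_classes (simB B b)).
Proof.
have [L hL [R hR [d _ hB0]]] := int_Smith_normal_form B.
pose δ (i : 'I_n) := d`_i.
have hB : B = L *m diag_mx (\row_i δ i) *m R.
  rewrite hB0; congr (_ *m _ *m _); apply/matrixP => i j; rewrite !mxE.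
  case: (eqVneq i j) => [->|ne]; first by rewrite eqxx.
  by have -> : (i == j :> nat) = false by rewrite (inj_eq val_inj) (negbTE ne).
have hdet : \det B = \det L * \prod_i δ i * \det R.
  by rewrite hB !det_mulmx det_diag; congr (_ * _ * _); apply: eq_bigr => i _; rewrite mxE.
have uL : \det L \is a GRing.unit by rewrite -unitmxE.
have uR : \det R \is a GRing.unit by rewrite -unitmxE.
split; first exact: simB_equiv.
split.
  move=> hnz.
  have hδ i : δ i != 0.
    apply: contra hnz => /eqP h0; rewrite hdet (bigD1 i) //= h0 mul0r mulr0 mul0r.
    by [].
  have [k [hk hc]] := main_nz b hL hR hB hδ.
  exists k; split => //; rewrite hc hdet !abszM absz_prod (absz_unit uL) (absz_unit uR).
  by rewrite mul1n muln1.
move=> h0.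
have nL : \det L != 0 by apply/eqP => e; move: (absz_unit uL); rewrite e.
have nR : \det R != 0 by apply/eqP => e; move: (absz_unit uR); rewrite e.
move: h0; rewrite hdet => /eqP; rewrite !mulf_eq0 (negbTE nL) (negbTE nR) orbF /=.
move=> /prodf_eq0 [i0 _ /eqP hi0].
exact: (main_zero b hL hR hB hi0).
Qed.
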